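(* Let $t\ge 2$ and $n\ge t+5$ be integers with $n-t\equiv 2\pmod 3$. Then $\rho\big(K_1\vee (K_{1,t}\cup \tfrac{n-t-2}{3}K_3)\big)<\rho(K_{1,1,n-2})$.
   Context: $\rho$ denotes the spectral radius (largest adjacency eigenvalue). $G\vee H$ is the join of disjoint graphs $G$ and $H$ (disjoint union plus all edges between them), $G\cup H$ is the disjoint union, $kG$ denotes $k$ disjoint copies of $G$, $K_{1,t}$ is the star with $t$ leaves, and $K_{1,1,n-2}$ is the complete tripartite graph with parts of sizes $1,1,n-2$. *)

(* Defs.v *)
From HB Require Import structures.
From mathcomp Require Import all_boot all_order all_algebra.
From mathcomp Require Import classical_sets reals.
Set Implicit Arguments. Unset Strict Implicit. Unset Printing Implicit Defensive.
Import Order.TTheory GRing.Theory Num.Theory.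
Local Open Scope ring_scope.
Local Open Scope classical_set_scope.

(* Simple graphs are symmetric irreflexive relations on a finite vertex type. *)

Definition complete_graph (m : nat) : rel 'I_m := fun x y => x != y.

Definition star_graph (t : nat) : rel 'I_t.+1 :=
  fun x y => ((x == ord0) && (y != ord0)) || ((y == ord0) && (x != ord0)).

Definition graph_union (T U : finType) (e : rel T) (f : rel U) : rel (T + U) :=
  fun x y => match x, y with
             | inl a, inl b => e a b
             | inr a, inr b => f a b
             | _, _ => false
             end.

Definition graph_join (T U : finType) (e : rel T) (f : rel U) : rel (T + U) :=
  fun x y => match x, y with
             | inl a, inl b => e a b
             | inr a, inr b => f a b
             | _, _ => true
             end.

Definition graph_copies (k : nat) (T : finType) (e : rel T) : rel ('I_k * T) :=
  fun x y => (x.1 == y.1) && e x.2 y.2.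

Definition tri_part (a b c : nat) (x : 'I_a + 'I_b + 'I_c) : nat :=
  match x with inl (inl _) => 0%N | inl (inr _) => 1%N | inr _ => 2%N end.
Definition complete_tripartite (a b c : nat) : rel ('I_a + 'I_b + 'I_c) :=
  fun x y => tri_part x != tri_part y.

Definition adj_mx (R : realType) (T : finType) (e : rel T) : 'M[R]_#|T| :=
  \matrix_(i, j) (e (enum_val i) (enum_val j))%:R.

Definition spec_rad (R : realType) (T : finType) (e : rel T) : R :=
  sup [set x : R | eigenvalue (adj_mx R e) x].
Arguments complete_graph m : clear implicits.
Arguments star_graph t : clear implicits.
Arguments complete_tripartite a b c : clear implicits.
Arguments graph_copies k [T] e.
Arguments spec_rad R [T] e.

(* Main.v *)
Require Import Defs.
From HB Require Import structures.
From mathcomp Require Import all_boot all_order all_algebra.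
From mathcomp Require Import boolp classical_sets reals.
From mathcomp Require Import ring lra zify.
Import Order.TTheory GRing.Theory Num.Theory.
Local Open Scope ring_scope.



Lemma sum_enum (R : nmodType) (T : finType) (F : T -> R) :
  \sum_(x : T) F x = \sum_(i < #|T|) F (enum_val i).
Proof.
rewrite -(big_enum_val (A:=T)). by apply: eq_bigl => x; rewrite inE.
Qed.

Section Gen.
Variable R : realType.

Lemma collatz m (A : 'M[R]_m) (w : 'I_m -> R) (mu lam : R) :
  (forall i j, 0 <= A i j) -> (forall i, 0 < w i) ->
  (forall j, \sum_i A i j * w i <= mu * w j) -> eigenvalue A lam -> lam <= mu.
Proof.
move=> A0 w0 H /eigenvalueP [v Hv vn0].
have [j0 vj0]: exists j, v 0 j != 0.
  apply/existsP; apply: contraR vn0; rewrite negb_exists => /forallP P.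
  apply/eqP/matrixP => i j; rewrite (ord1 i) mxE; exact/eqP/negbNE/P.
pose F := fun j => `|v 0 j| / w j.
pose j := [arg max_(j > j0) F j]%O.
have Fmax : forall i, F i <= F j.
  rewrite /j; case: arg_maxP => //= i _ Hi k; exact: Hi.
have Fj0 : 0 < F j0 by rewrite /F divr_gt0 ?normr_gt0.
have Fpos : 0 < F j by apply: lt_le_trans (Fmax j0).
have vjpos : 0 < `|v 0 j|.
  by move: Fpos; rewrite /F pmulr_lgt0 // invr_gt0.
have e : lam * v 0 j = \sum_i v 0 i * A i j.
  by move/matrixP: Hv => /(_ 0 j); rewrite !mxE => <-.
have key : `|lam| * `|v 0 j| <= mu * `|v 0 j|.
  rewrite -normrM e.
  apply: le_trans (ler_norm_sum _ _ _) _.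
  apply: (@le_trans _ _ (\sum_i F j * (A i j * w i))).
    apply: ler_sum => i _; rewrite normrM (ger0_norm (A0 i j)).
    have : `|v 0 i| <= F j * w i.
      by rewrite -ler_pdivrMr // (Fmax i).
    by move=> h; rewrite mulrCA [_ * A i j]mulrC; apply: ler_wpM2l.
  rewrite -mulr_sumr.
  apply: le_trans (ler_wpM2l (ltW Fpos) (H j)) _.
  by rewrite /F mulrCA divfK ?(gt_eqF (w0 j)).
rewrite ler_pM2r // in key.
exact: le_trans (ler_norm lam) key.
Qed.

Lemma graph_ub (T : finType) (e : rel T) (W : T -> R) mu lam :
  (forall x, 0 < W x) -> (forall y, \sum_x (e x y)%:R * W x <= mu * W y) ->
  eigenvalue (adj_mx R e) lam -> lam <= mu.
Proof.
move=> W0 H; apply: (@collatz _ _ (fun i => W (enum_val i))).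
- by move=> i j; rewrite mxE ler0n.
- by move=> i.
- move=> j; apply: le_trans (H (enum_val j)); rewrite (@sum_enum _ T).
  rewrite le_eqVlt; apply/orP; left; apply/eqP. apply: eq_bigr => i _.
  by rewrite mxE.
Qed.

Lemma graph_eig (T : finType) (e : rel T) (V : T -> R) lam :
  (exists x, V x != 0) -> (forall y, \sum_x V x * (e x y)%:R = lam * V y) ->
  eigenvalue (adj_mx R e) lam.
Proof.
move=> [x0 Vx0] H; apply/eigenvalueP.
exists (\row_i V (enum_val i)).
  apply/matrixP => i j; rewrite (ord1 i) !mxE.
  rewrite -H (@sum_enum _ T); apply: eq_bigr => k _.
  by rewrite !mxE.
apply: contraNneq Vx0 => /matrixP /(_ 0 (enum_rank x0)).
by rewrite !mxE enum_rankK => ->.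
Qed.

Lemma spec_rad_le (T : finType) (e : rel T) mu :
  0 <= mu -> (forall lam, eigenvalue (adj_mx R e) lam -> lam <= mu) ->
  spec_rad R e <= mu.
Proof.
move=> mu0 H; rewrite /spec_rad.
have [[x Ex]|E0] := pselect ([set x : R | eigenvalue (adj_mx R e) x] !=set0)%classic.
  by apply: ge_sup; [exists x | move=> y; exact: H].
have -> : [set x : R | eigenvalue (adj_mx R e) x]%classic = set0%classic.
  by apply/seteqP; split => // x Ex; apply: E0; exists x.
by rewrite sup0.
Qed.

Lemma spec_rad_ge (T : finType) (e : rel T) lam :
  eigenvalue (adj_mx R e) lam -> lam <= spec_rad R e.
Proof.
move=> Hl; apply: ub_le_sup => //.
exists (#|T|%:R) => x Ex /=.
apply: (@graph_ub _ e (fun _ => 1)) Ex => // y.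
rewrite mulr1 -sum1_card natr_sum; apply: ler_sum => z _.
by rewrite mulr1 lern1 leq_b1.
Qed.

End Gen.



Lemma K11_eig (R : realType) (m : nat) (s : R) : 0 < s -> s ^+ 2 = s + 2 * m%:R ->
  eigenvalue (adj_mx R (complete_tripartite 1 1 m)) s.
Proof.
move=> s0 hs.
have sn0 : s != 0 by rewrite gt_eqF.
have hm : m%:R = (s ^+ 2 - s) / 2 :> R by rewrite hs; field.
apply: (@graph_eig _ _ _ (fun x => match x with inl _ => 1 | inr _ => 2 / s end)).
  by exists (inl (inl ord0)); rewrite oner_eq0.
move=> y; rewrite !big_sumType !big_ord1 /=.
case: y => [[y|y]|y] /=; rewrite /complete_tripartite /=.
- under eq_bigr do rewrite mulr1.
  rewrite sumr_const card_ord -[_ *+ m]mulr_natr hm; field; exact: sn0.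
- under eq_bigr do rewrite mulr1.
  rewrite sumr_const card_ord -[_ *+ m]mulr_natr hm; field; exact: sn0.
- under eq_bigr do rewrite mulr0.
  rewrite big1 // ; field; exact: sn0.
Qed.



Lemma keyineq (R : realType) (s tt kk : R) : 2 <= tt -> 1 <= kk -> 0 < s ->
  s ^+ 2 = s + 2 * tt + 6 * kk ->
  2 < s /\ 0 < s + tt + 6 * kk /\
  (s + tt) / (s + tt + 6 * kk) + tt * ((s + 1) / (s + tt + 6 * kk)) + 3 * kk / (s - 2) < s.
Proof.
move=> ht hk s0 hs.
have s2 : 2 < s by nra.
have D0 : 0 < s + tt + 6 * kk by lra.
have hM : s < 3 * tt + 6 * kk - 4 by nra.
split => //; split => //.
rewrite -subr_gt0.
have -> : s - ((s + tt) / (s + tt + 6 * kk) + tt * ((s + 1) / (s + tt + 6 * kk)) + 3 * kk / (s - 2))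
  = ((s + 6 * kk - 2) * (s ^+ 2 - s - 2 * tt - 6 * kk) + 3 * kk * (3 * tt + 6 * kk - 4 - s))
    / ((s + tt + 6 * kk) * (s - 2)).
  field.
  by apply/andP; split; apply/negP => /eqP; lra.
rewrite hs.
apply: divr_gt0; last by apply: mulr_gt0; lra.
nra.
Qed.



Lemma sum_pair (R : nmodType) (I J : finType) (F : I * J -> R) :
  \sum_p F p = \sum_i \sum_j F (i, j).
Proof. by rewrite pair_bigA; apply: eq_bigr => [[]]. Qed.

Lemma lift0_neq n (i : 'I_n) : (lift ord0 i == ord0 :> 'I_n.+1) = false.
Proof. by apply/negbTE; rewrite eq_sym neq_lift. Qed.

Lemma G1_sums (R : realType) (t k : nat) (a wc wL wT : R) :
  let W := fun x : 'I_1 + ('I_t.+1 + ('I_k * 'I_3)) =>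
    match x with inl _ => a | inr (inl i) => if i == ord0 then wc else wL
                | inr (inr _) => wT end in
  let e := graph_join (complete_graph 1) (graph_union (star_graph t)
                   (graph_copies k (complete_graph 3))) in
  forall y, \sum_x (e x y)%:R * W x =
    match y with inl _ => wc + t%:R * wL + 3 * k%:R * wT
    | inr (inl i) => if i == ord0 then a + t%:R * wL else a + wc
    | inr (inr _) => a + 2 * wT end.
Proof.
move=> W e y.
rewrite !big_sumType big_ord1 big_ord_recl sum_pair /e /W /=.
case: y => [y|[y|[p q]]] /=.
- rewrite (ord1 y) /complete_graph eqxx /=.
  rewrite !sumr_const !card_ord; ring.
- case: (unliftP ord0 y) => [j ->|->]; rewrite /star_graph ?lift0_neq ?eqxx /=.
  + rewrite !sumr_const !card_ord; ring.
  + rewrite !sumr_const !card_ord; ring.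
- have -> : \sum_(i < k) \sum_(j < 3) (graph_copies k (complete_graph 3) (i, j) (p, q))%:R * wT = 2 * wT.
    rewrite (bigD1 p) //= [X in _ + X = _]big1 => [|i ip]; last first.
      have {}ip : (i == p) = false by apply/negbTE.
      by apply: big1 => j _; rewrite /graph_copies /= ip mul0r.
    rewrite /graph_copies /= eqxx /= !big_ord_recl big_ord0 /complete_graph.
    by case: q => [[|[|[|q]]] hq] //=; ring.
  rewrite !sumr_const !card_ord; ring.
Qed.



Lemma G1_ub (R : realType) (t k : nat) (s : R) : (2 <= t)%N -> (1 <= k)%N -> 0 < s ->
  s ^+ 2 = s + 2 * t%:R + 6 * k%:R ->
  exists mu, mu < s /\ 0 <= mu /\ forall lam,
    eigenvalue (adj_mx R (graph_join (complete_graph 1%N)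
                (graph_union (star_graph t)
                   (graph_copies k (complete_graph 3%N))))) lam -> lam <= mu.
Proof.
move=> ht hk s0 hs.
set tt : R := t%:R; set kk : R := k%:R.
have htt : 2 <= tt by rewrite /tt (ler_nat R 2 t).
have hkk : 1 <= kk by rewrite /kk (ler_nat R 1 k).
have [s2 [D0 hf]] := @keyineq R s tt kk htt hkk s0 hs.
set D := s + tt + 6 * kk in D0 hf.
set wc := (s + tt) / D. set wL := (s + 1) / D. set wT := 1 / (s - 2).
set f := wc + tt * wL + 3 * kk / (s - 2) in hf.
have wc0 : 0 < wc by rewrite /wc divr_gt0 //; lra.
have wL0 : 0 < wL by rewrite /wL divr_gt0 //; lra.
have wT0 : 0 < wT by rewrite /wT divr_gt0 //; lra.
have f0 : 0 < f.
  rewrite /f; apply: addr_gt0; first by apply: addr_gt0 => //; apply: mulr_gt0 => //; lra.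
  by apply: divr_gt0; lra.
have hf' : f = wc + tt * wL + 3 * kk * wT by rewrite /f /wT; field; apply/eqP => ?; lra.
set a := (1 + f / s) / 2.
have fs1 : f / s < 1 by rewrite ltr_pdivrMr // mul1r.
have fs0 : 0 < f / s by apply: divr_gt0.
have a0 : 0 < a by rewrite /a; lra.
have a1 : a < 1 by rewrite /a; lra.
have sa : s * a = (s + f) / 2 by rewrite /a; field; apply/eqP => ?; lra.
have e2 : s * wc - tt * wL = 1.
  have -> : s * wc - tt * wL = (s ^+ 2 - tt) / D by rewrite /wc /wL; field; apply/eqP => ?; lra.
  rewrite (_ : s ^+ 2 - tt = D); first by apply: divff; apply/eqP => ?; lra.
  by rewrite hs /D /tt /kk; ring.
have e3 : s * wL - wc = 1.
  have -> : s * wL - wc = (s ^+ 2 - tt) / D by rewrite /wc /wL; field; apply/eqP => ?; lra.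
  rewrite (_ : s ^+ 2 - tt = D); first by apply: divff; apply/eqP => ?; lra.
  by rewrite hs /D /tt /kk; ring.
have e4 : s * wT - 2 * wT = 1 by rewrite /wT; field; apply/eqP => ?; lra.
set r1 := f / a. set r2 := (a + tt * wL) / wc. set r3 := (a + wc) / wL.
set r4 := (a + 2 * wT) / wT.
have r1s : r1 < s by rewrite /r1 ltr_pdivrMr // sa; lra.
have r2s : r2 < s by rewrite /r2 ltr_pdivrMr //; lra.
have r3s : r3 < s by rewrite /r3 ltr_pdivrMr //; lra.
have r4s : r4 < s by rewrite /r4 ltr_pdivrMr //; lra.
have r40 : 0 < r4 by rewrite /r4 divr_gt0 //; lra.
exists (Num.max r1 (Num.max r2 (Num.max r3 r4))).
split; first by rewrite !gt_max r1s r2s r3s r4s.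
split; first by rewrite !le_max (ltW r40) !orbT.
move=> lam; apply: (@graph_ub _ _ _
  (fun x : 'I_1 + ('I_t.+1 + ('I_k * 'I_3)) =>
    match x with inl _ => a | inr (inl i) => if i == ord0 then wc else wL
                | inr (inr _) => wT end)).
  by move=> [x|[x|x]] //; case: ifP.
move=> y; rewrite G1_sums.
case: y => [y|[y|y]].
- rewrite -/tt -/kk -hf' -ler_pdivrMr //.
  by rewrite !le_max lexx.
- case: ifP => _.
  + rewrite -/tt -ler_pdivrMr //.
    by rewrite !le_max lexx !orbT.
  + rewrite -ler_pdivrMr //.
    by rewrite !le_max lexx !orbT.
- rewrite -ler_pdivrMr //.
  by rewrite !le_max lexx !orbT.
Qed.



Theorem lemma4p6 (R : realType) (t n : nat) :
  (2 <= t)%N -> (t + 5 <= n)%N -> ((n - t) %% 3 = 2)%N ->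
  spec_rad R (graph_join (complete_graph 1%N)
                (graph_union (star_graph t)
                   (graph_copies ((n - t - 2) %/ 3) (complete_graph 3%N))))
  < spec_rad R (complete_tripartite 1%N 1%N (n - 2)%N).
Proof.
move=> ht hn hmod.
set k := ((n - t - 2) %/ 3)%N.
have hk : n = (t + 2 + 3 * k)%N by rewrite /k; lia.
have k1 : (1 <= k)%N by lia.
set tt : R := t%:R; set kk : R := k%:R.
have htt : 2 <= tt by rewrite /tt (ler_nat R 2 t).
have hkk : 1 <= kk by rewrite /kk (ler_nat R 1 k).
set q := Num.sqrt (8 * (tt + 2 + 3 * kk) - 15).
have q0 : 0 <= q by apply: sqrtr_ge0.
have hq : q ^+ 2 = 8 * (tt + 2 + 3 * kk) - 15 by rewrite sqr_sqrtr //; lra.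
set s := (1 + q) / 2.
have s0 : 0 < s by rewrite /s; lra.
have hs : s ^+ 2 = s + 2 * tt + 6 * kk.
  have -> : s ^+ 2 = (1 + 2 * q + q ^+ 2) / 4 by rewrite /s; field.
  by rewrite hq /s; field.
have [mu [mus [mu0 Hmu]]] := @G1_ub R t k s ht k1 s0 hs.
apply: (le_lt_trans (@spec_rad_le R _ _ mu mu0 Hmu)).
apply: (lt_le_trans mus); apply: (@spec_rad_ge R).
apply: (@K11_eig R) => //.
rewrite hs (_ : (n - 2)%N = (t + 3 * k)%N); last by lia.
by rewrite natrD natrM /tt /kk; ring.
Qed.
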